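(* Let $(\mathbf k((G)),l)$ be a series field with prelogarithmic section and $\psi$ a morphism from $(\mathbf k((G)),l)$ to itself. Let $U\subseteq H$ be subgroups of $G$ satisfying $(\dagger)$: $\mathrm{Log}(h)<|f|$ for all $h\in H$ and all nonzero $f\in\mathbf k((H^{>U}))$. Then $\psi(U)\subseteq\psi(H)$ also satisfy $(\dagger)$, i.e. $\mathrm{Log}(h_1)<|f_1|$ for all $h_1\in\psi(H)$ and all nonzero $f_1\in\mathbf k((\psi(H)^{>\psi(U)}))$.
   Context: Let $\mathbf k$ be an ordered field and $(G,\cdot,<)$ a totally ordered abelian group (written multiplicatively). $\mathbf k((G))$ denotes the field of generalized power series $\alpha=\sum_{g\in G}\alpha(g)\,g$ ($\alpha(g)\in\mathbf k$) with anti-well-ordered support, usual operations, canonical valuation $v(\alpha)=\max\operatorname{supp}\alpha$ and ordering $\alpha>0$ iff $\alpha(v(\alpha))>0$. For $S\subseteq G$, $\mathbf k((S))=\{\alpha:\operatorname{supp}\alpha\subseteq S\}$; for a subgroup $H$ and $A\subseteq G$, $H^{>A}=\{h\in H:h>a\ \forall a\in A\}$. A prelogarithmic section is an order-preserving group embedding $l:(G,\cdot)\to(\mathbf k((G^{>1})),+)$ (with $G^{>1}=\{g>1\}$). For $g\in G$, $\mathrm{Log}(g)=l(g)$ ($\mathrm{Log}$ being the logarithm of the EL-series field $\mathbf k((G))^{EL}$, which extends $l$). An order-preserving group embedding $\psi:G\to G$, extended to $\mathbf k((G))$ by $\psi(\sum a_gg)=\sum a_g\psi(g)$, is a morphism of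 $(\mathbf k((G)),l)$ to itself if $\psi\circ l=l\circ\psi$ on $G$. *)

(* Defs.v *)
From HB Require Import structures.
From mathcomp Require Import all_boot all_order all_algebra.
From Stdlib Require Import ClassicalEpsilon.
Set Implicit Arguments. Unset Strict Implicit. Unset Printing Implicit Defensive.
Import Order.TTheory GRing.Theory Num.Theory.
Local Open Scope ring_scope.

Record oagroup := OAGroup {
  oag_car :> Type;
  oag_mul : oag_car -> oag_car -> oag_car;
  oag_one : oag_car;
  oag_inv : oag_car -> oag_car;
  oag_lt : oag_car -> oag_car -> Prop;
  oag_mulA : forall x y z, oag_mul x (oag_mul y z) = oag_mul (oag_mul x y) z;
  oag_mulC : forall x y, oag_mul x y = oag_mul y x;
  oag_mul1 : forall x, oag_mul oag_one x = x;
  oag_mulV : forall x, oag_mul (oag_inv x) x = oag_one;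
  oag_lt_irr : forall x, ~ oag_lt x x;
  oag_lt_trans : forall x y z, oag_lt x y -> oag_lt y z -> oag_lt x z;
  oag_lt_total : forall x y, oag_lt x y \/ x = y \/ oag_lt y x;
  oag_lt_mul : forall x y z, oag_lt x y -> oag_lt (oag_mul x z) (oag_mul y z)
}.

Section Series.
Variables (k : realFieldType) (G : oagroup).

Definition glt := @oag_lt G.
Definition gle (x y : G) := glt x y \/ x = y.

Definition anti_well_ordered (S : G -> Prop) : Prop :=
  forall P : G -> Prop, (forall x, P x -> S x) -> (exists x, P x) ->
    exists m, P m /\ forall x, P x -> gle x m.

(* A formal sum  sum_g alpha(g) g  is represented by its coefficient map. *)
Definition support (a : G -> k) : G -> Prop := fun g => a g != 0.

(* alpha is an element of k((S)): anti-well-ordered support contained in S.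
   k((G)) itself is  is_series_on (fun _ => True). *)
Definition is_series_on (S : G -> Prop) (a : G -> k) : Prop :=
  anti_well_ordered (support a) /\ (forall g, support a g -> S g).

Definition sadd (a b : G -> k) : G -> k := fun g => a g + b g.
Definition sopp (a : G -> k) : G -> k := fun g => - a g.

(* alpha > 0 iff alpha(v(alpha)) > 0, where v(alpha) = max supp alpha. *)
Definition spos (a : G -> k) : Prop :=
  exists g, 0 < a g /\ forall h, glt g h -> a h = 0.
Definition slt (a b : G -> k) : Prop := spos (sadd b (sopp a)).

Definition sabs (a : G -> k) : G -> k :=
  if excluded_middle_informative (spos a) then a else sopp a.

Definition G_gt1 : G -> Prop := fun g => glt (oag_one G) g.

Definition prelog_section (l : G -> (G -> k)) : Prop :=
  (forall g, is_series_on G_gt1 (l g)) /\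
  (forall g h, l (oag_mul g h) = sadd (l g) (l h)) /\
  (forall g h, glt g h -> slt (l g) (l h)).

Definition oag_embedding (psi : G -> G) : Prop :=
  (forall g h, psi (oag_mul g h) = oag_mul (psi g) (psi h)) /\
  (forall g h, glt g h -> glt (psi g) (psi h)).

(* Extension of psi to series: psi(sum a_g g) = sum a_g psi(g). *)
Definition spush (psi : G -> G) (a : G -> k) : G -> k := fun g' =>
  match excluded_middle_informative (exists g, psi g = g') with
  | left e => a (proj1_sig (constructive_indefinite_description _ e))
  | right _ => 0
  end.

Definition series_morphism (l : G -> (G -> k)) (psi : G -> G) : Prop :=
  oag_embedding psi /\ forall g, spush psi (l g) = l (psi g).

Definition is_subgroup (H : G -> Prop) : Prop :=
  H (oag_one G) /\ (forall x y, H x -> H y -> H (oag_mul x y)) /\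
  (forall x, H x -> H (oag_inv x)).

Definition above (H A : G -> Prop) : G -> Prop :=
  fun h => H h /\ forall a, A a -> glt a h.

Definition gimage (psi : G -> G) (S : G -> Prop) : G -> Prop :=
  fun g => exists s, S s /\ psi s = g.

(* Condition (dagger) for U <= H, with Log(h) = l(h) for h in G. *)
Definition dagger (l : G -> (G -> k)) (U H : G -> Prop) : Prop :=
  forall h, H h -> forall f : G -> k, is_series_on (above H U) f ->
    ~ (forall g, f g = 0) -> slt (l h) (sabs f).

End Series.

(* Main.v *)
Require Import Defs.
From mathcomp Require Import all_boot all_order all_algebra.
From Stdlib Require Import ClassicalEpsilon Classical.
Import Order.TTheory GRing.Theory Num.Theory.
Local Open Scope ring_scope.

Set Implicit Arguments.
Section Aux.
Variables (k : realFieldType) (G : oagroup) (psi : G -> G).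
Hypothesis mono : forall {g h}, glt g h -> glt (psi g) (psi h).

Lemma psi_inj g h : psi g = psi h -> g = h.
Proof.
move=> E; have [L|[//|L]] := oag_lt_total g h.
- have := mono L; rewrite E => /oag_lt_irr [].
- have := mono L; rewrite E => /oag_lt_irr [].
Qed.

Lemma psi_refl g h : glt (psi g) (psi h) -> glt g h.
Proof.
move=> L; have [//|[E|L2]] := oag_lt_total g h.
- by subst; case: (oag_lt_irr L).
- by case: (oag_lt_irr (oag_lt_trans L (mono L2))).
Qed.

Lemma spush_psi (a : G -> k) g : spush psi a (psi g) = a g.
Proof.
rewrite /spush; case: excluded_middle_informative => [e|n].
- case: (constructive_indefinite_description _ e) => x /= /psi_inj -> //.
- by case: n; exists g.
Qed.

Lemma spush_out (a : G -> k) g' : ~ (exists g, psi g = g') -> spush psi a g' = 0.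
Proof. by rewrite /spush; case: excluded_middle_informative. Qed.

Lemma spush_cases (P : G -> Prop) :
  (forall g, P (psi g)) -> (forall g', ~ (exists g, psi g = g') -> P g') ->
  forall g', P g'.
Proof.
move=> H1 H2 g'; case: (classic (exists g, psi g = g')) => [[g <-]|n]; auto.
Qed.

Lemma spos_ext (a b : G -> k) : (forall g, a g = b g) -> spos a -> spos b.
Proof.
move=> E [g [P Z]]; exists g; split; first by rewrite -E.
by move=> h /Z; rewrite E.
Qed.

Lemma spos_push (a : G -> k) : spos a <-> spos (spush psi a).
Proof.
split.
- move=> [g [P Z]]; exists (psi g); rewrite spush_psi; split => //.
  apply: (spush_cases (fun h => glt (psi g) h -> spush psi a h = 0)).
  + by move=> h L; rewrite spush_psi; apply: Z; apply: psi_refl.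
  + by move=> h n _; apply: spush_out.
- move=> [g' [P Z]].
  case: (classic (exists g, psi g = g')) => [[g E]|n]; last first.
    by move: P; rewrite spush_out // ltxx.
  subst g'; exists g; rewrite -spush_psi; split => //.
  by move=> h L; rewrite -spush_psi; apply: Z; apply: mono.
Qed.

Lemma spush_add (a b : G -> k) g' :
  spush psi (sadd a b) g' = spush psi a g' + spush psi b g'.
Proof.
move: g'; apply: spush_cases => [g|g' n]; first by rewrite !spush_psi.
by rewrite !spush_out // addr0.
Qed.

Lemma spush_opp (a : G -> k) g' : spush psi (sopp a) g' = - spush psi a g'.
Proof.
move: g'; apply: spush_cases => [g|g' n]; first by rewrite !spush_psi.
by rewrite !spush_out // oppr0.
Qed.

End Aux.
Arguments psi_inj [G psi] mono [g h].
Arguments psi_refl [G psi] mono [g h].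
Arguments spos_push [k G psi] mono a.
Arguments spos_ext [k G a b].
Arguments spush_cases [G psi].
Arguments spush_psi [k G psi].
Arguments spush_out [k G psi].
Arguments spush_add [k G psi].
Arguments spush_opp [k G psi].

Theorem lemma8 (k : realFieldType) (G : oagroup) (l : G -> (G -> k))
  (psi : G -> G) (U H : G -> Prop) :
  prelog_section l -> series_morphism l psi ->
  is_subgroup U -> is_subgroup H -> (forall u, U u -> H u) ->
  dagger l U H ->
  dagger l (gimage psi U) (gimage psi H).
Proof.
move=> _ [[_ mono] Hl] _ _ _ D h1 [h [Hh <-]] f1 [Haw Hsupp] Hnz.
pose f := fun g => f1 (psi g).
have Hsf : forall g, support f g -> above H U g.
  move=> g /Hsupp [[s [Hs /(psi_inj mono) E]] HU]; subst s; split => //.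
  by move=> u Uu; apply: (psi_refl mono); apply: HU; exists u.
have Hser : is_series_on (above H U) f.
  split => //.
  move=> P PS [x Px].
  have [m' [[m [Pm Em]] Mx]] :
      exists m, (fun g' => exists g, P g /\ psi g = g') m /\
        forall x, (fun g' => exists g, P g /\ psi g = g') x -> gle x m.
    apply: Haw; last by exists (psi x), x.
    by move=> g' [g [Pg <-]]; apply: PS.
  subst m'; exists m; split => // y Py.
  case: (Mx (psi y)) => [|L|E]; first by exists y.
  - by left; apply: (psi_refl mono).
  - by right; apply: (psi_inj mono).
have Hfnz : ~ (forall g, f g = 0).
  move=> Z; apply: Hnz => g'.
  have [//|ne] := eqVneq (f1 g') 0.
  have [[s [_ E]] _] := Hsupp _ ne.
  by move: (Z s); rewrite /f E => E2; move: ne; rewrite E2 eqxx.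
have Hf1 : forall g', spush psi f g' = f1 g'.
  apply: (@spush_cases _ psi (fun g' => spush psi f g' = f1 g')).
  - by move=> g /=; rewrite spush_psi.
  - move=> g' n /=; rewrite spush_out //.
    have [//|ne] := eqVneq (f1 g') 0.
    have [[s [_ E]] _] := Hsupp _ ne.
    by case: n; exists s.
have L := D h Hh f Hser Hfnz.
move: L; rewrite /slt => /(spos_push mono) L.
apply: (spos_ext _ L) => g'.
rewrite (spush_add mono) (spush_opp mono) Hl /sadd /sopp.
congr (_ - _).
have Eq : spos f <-> spos f1.
  split => P.
  - by apply: (spos_ext Hf1); apply: (proj1 (spos_push mono f)).
  - apply: (proj2 (spos_push mono f)); apply: (spos_ext _ P) => g; by rewrite Hf1.
rewrite /sabs.
case: excluded_middle_informative => P1; case: excluded_middle_informative => P2.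
- by rewrite Hf1.
- by case: P2; apply: (proj1 Eq).
- by case: P1; apply: (proj2 Eq).
- by rewrite (spush_opp mono) Hf1.
Qed.
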